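(* Let $t\ge1$. \begin{enumerate} \item If the minimal hyperbinary expansion of $n$ is $1^t2$, then $A(n)$ is the directed path graph \[1^t2\twoheadrightarrow 1^{t-1}20\twoheadrightarrow\cdots\twoheadrightarrow 20^t\to 10^{t+1}.\] \item If the minimal hyperbinary expansion of $n$ is $2^t$, then $A(n)$ is the directed path graph \[2^t\to 102^{t-1}\to 1102^{t-2}\to\cdots\to 1^t0.\] \end{enumerate} Here each arrow is an arc with the indicated label, and there are no other vertices or arcs.
   Context: A hyperbinary expansion of a nonnegative integer $n$ is a word $x_0\cdots x_k$ over $\{0,1,2\}$ with $x_0\ne0$ and $\sum_i x_i2^{k-i}=n$. $\mathcal H(n)$ is the set of such expansions. $A(n)$ is the directed graph on $\mathcal H(n)$ with the following labeled arcs, for arbitrary words $\mathbf x,\mathbf y$ over $\{0,1,2\}$ whenever both endpoints lie in $\mathcal H(n)$: \begin{itemize} \item an arc labeled $\to$ from $\mathbf x02\mathbf y$ to $\mathbf x10\mathbf y$ and from $2\mathbf y$ to $10\mathbf y$; \item an arc labeled $\twoheadrightarrow$ from $\mathbf x12\mathbf y$ to $\mathbf x20\mathbf y$. \end{itemize} The minimal hyperbinary expansion of $n$ is its unique hyperbinary expansion containing no digit $0$. Exponents denote repetition of a letter, e.g. $1^t=1\cdots1$ ($t$ times). *)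

(* Defs.v *)
(* Words over {0,1,2} are represented as seq nat whose
   entries are all < 3; the first letter x_0 is the head of the list. *)
From mathcomp Require Import all_boot.
Set Implicit Arguments. Unset Strict Implicit. Unset Printing Implicit Defensive.

Definition hb_value (w : seq nat) : nat := foldl (fun a d => a.*2 + d) 0 w.

Definition hyperbinary (n : nat) (w : seq nat) : Prop :=
  [/\ all (fun d => d < 3) w, head 0 w != 0 & hb_value w = n].

Definition minimal_hyperbinary (n : nat) (w : seq nat) : Prop :=
  hyperbinary n w /\ 0 \notin w.

(* arc labels:  Arr = "->",  DArr = "->>" *)
Inductive arc_label := Arr | DArr.

Definition arcA (n : nat) (l : arc_label) (u v : seq nat) : Prop :=
  [/\ hyperbinary n u, hyperbinary n v &
   match l with
   | Arr => (exists x y : seq nat, u = x ++ [:: 0; 2] ++ y /\ v = x ++ [:: 1; 0] ++ y)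
            \/ (exists y : seq nat, u = 2 :: y /\ v = [:: 1; 0] ++ y)
   | DArr => exists x y : seq nat, u = x ++ [:: 1; 2] ++ y /\ v = x ++ [:: 2; 0] ++ y
   end].

Definition A_is_path (n : nat) (vs : seq (seq nat)) (ls : seq arc_label) : Prop :=
  [/\ size vs = (size ls).+1, uniq vs,
      (forall w, hyperbinary n w <-> w \in vs) &
      (forall l u v, arcA n l u v <->
         exists2 i, i < size ls &
           [/\ l = nth Arr ls i, u = nth [::] vs i & v = nth [::] vs i.+1])].

(* Main.v *)
Require Import Defs.
From mathcomp Require Import all_boot zify.
Set Implicit Arguments. Unset Strict Implicit.

Lemma rcons_n (T : Type) a (x : T) : rcons (nseq a x) x = nseq a.+1 x.
Proof. by rewrite -cats1 -addn1 nseqD. Qed.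

Lemma hbv_rcons w d : hb_value (rcons w d) = 2 * hb_value w + d.
Proof. by rewrite /hb_value foldl_rcons mul2n. Qed.

Lemma foldl_hb a v : foldl (fun a d => a.*2 + d) a v = a * 2 ^ size v + hb_value v.
Proof.
rewrite /hb_value; elim: v a => [|d v IH] a /=; first by rewrite expn0 muln1 addn0.
rewrite (IH (a.*2 + d)) (IH (0.*2 + d)) expnS -!mul2n. lia.
Qed.

Lemma hbv_cat u v : hb_value (u ++ v) = hb_value u * 2 ^ size v + hb_value v.
Proof. by rewrite {1}/hb_value foldl_cat foldl_hb. Qed.

Lemma hbv_cons d v : hb_value (d :: v) = d * 2 ^ size v + hb_value v.
Proof. by rewrite -cat1s hbv_cat. Qed.

Lemma hbv_n1 a : hb_value (nseq a 1) = 2 ^ a - 1.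
Proof.
elim: a => [|a IH] //. rewrite -rcons_n hbv_rcons IH expnS.
have : 0 < 2 ^ a by rewrite expn_gt0. lia.
Qed.

Lemma hbv_n0 a : hb_value (nseq a 0) = 0.
Proof. by elim: a => // a; rewrite -rcons_n hbv_rcons => ->. Qed.

Lemma hbv_n2 a : hb_value (nseq a 2) = 2 ^ a.+1 - 2.
Proof.
elim: a => [|a IH] //. rewrite -rcons_n hbv_rcons IH !expnS.
have : 0 < 2 ^ a by rewrite expn_gt0. lia.
Qed.

Lemma hb_pos n w : hyperbinary n w -> 0 < n.
Proof.
case: w => [|h w] [_ Hh <-]; first by [].
rewrite hbv_cons. case: h Hh => // h _.
by rewrite mulSn ltn_addr // ltn_addr // expn_gt0.
Qed.

Lemma hb_rcons n w d : w != [::] -> hyperbinary n (rcons w d) ->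
  [/\ hyperbinary (hb_value w) w, d < 3 & n = 2 * hb_value w + d].
Proof.
case: w => [|h w] // _ [].
rewrite all_rcons => /andP [Hd Ha] Hh <-. split => //; last by rewrite hbv_rcons.
Qed.

Lemma hb_nil1 n d : hyperbinary n [:: d] -> n = d.
Proof. by case=> _ _ <-. Qed.

Lemma H2km1 k w : hyperbinary (2 ^ k - 1) w -> w = nseq k 1.
Proof.
elim: k w => [|k IH] w H.
  by have := hb_pos H.
case/lastP: w H => [|w d] H; first by case: H.
have hk : 0 < 2 ^ k by rewrite expn_gt0. rewrite expnS in H.
case: (w =P [::]) => [Ew|/eqP wn]. subst w.
  have Hd := hb_nil1 (H : hyperbinary _ [:: d]).
  have [Hall _ _] := H. rewrite all_rcons andbT in Hall.
  have k0 : k = 0 by case: k hk Hd {IH H} => // k; rewrite expnS => hk Hd; lia.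
  subst k. by rewrite -Hd.
case: (hb_rcons wn H) => Hw Hd E.
have Hd1 : d = 1 by lia.
subst d. rewrite (IH w); last by have -> : 2 ^ k - 1 = hb_value w by lia.
by rewrite rcons_n.
Qed.

Lemma H2m m w : hyperbinary (2 ^ m) w ->
  (m = 0 /\ w = [:: 1]) \/ (exists2 i, i < m & w = nseq (m.-1 - i) 1 ++ 2 :: nseq i 0)
  \/ w = 1 :: nseq m 0.
Proof.
elim: m w => [|m IH] w H.
  case/lastP: w H => [|w d] H; first by case: H.
  case: (w =P [::]) => [Ew|/eqP wn].
    subst w. have Hd := hb_nil1 (H : hyperbinary _ [:: d]). subst d. by left.
  case: (hb_rcons wn H) => Hw Hd E. have := hb_pos Hw. rewrite expn0 in E. lia.
right.
have hk : 0 < 2 ^ m by rewrite expn_gt0.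
case/lastP: w H => [|w d] H; first by case: H.
case: (w =P [::]) => [Ew|/eqP wn].
  subst w. have Hd := hb_nil1 (H : hyperbinary _ [:: d]).
  have [Hall _ _] := H. rewrite all_rcons andbT in Hall.
  have m0 : m = 0 by case: m hk Hd {IH H} => // m; rewrite !expnS => hk Hd; lia.
  subst m. left. exists 0 => //. by rewrite /= -Hd.
case: (hb_rcons wn H) => Hw Hd E. rewrite expnS in E.
have : d = 0 \/ d = 2 by lia.
case=> Ed; subst d.
  have E' : hb_value w = 2 ^ m by lia.
  rewrite E' in Hw. case: (IH w Hw) => [[m0 ->]|[[i Hi ->]|->]].
  - subst m. right. by [].
  - left. exists i.+1 => //. rewrite -cats1 -catA /= cats1 rcons_n.
    by case: m Hi {IH E E' hk Hw H} => // m Hi /=; rewrite subnS.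
  - right. by rewrite rcons_cons rcons_n.
have E' : hb_value w = 2 ^ m - 1 by lia.
rewrite E' in Hw. move/H2km1: Hw => ->. left. exists 0 => //.
by rewrite cats1 subn0.
Qed.

Lemma H2k2 k w : 1 <= k -> hyperbinary (2 ^ k.+1 - 2) w ->
  w = nseq k 2 \/ exists2 i, 0 < i <= k & w = nseq i 1 ++ 0 :: nseq (k - i) 2.
Proof.
elim: k w => [|k IH] w // _ H.
have hk : 0 < 2 ^ k by rewrite expn_gt0.
case/lastP: w H => [|w d] H; first by case: H.
case: (w =P [::]) => [Ew|/eqP wn].
  subst w. have Hd := hb_nil1 (H : hyperbinary _ [:: d]).
  have [Hall _ _] := H. rewrite all_rcons andbT in Hall.
  rewrite !expnS in Hd.
  have m0 : k = 0 by case: k hk Hd {IH H} => // k; rewrite !expnS => hk Hd; lia.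
  subst k. left. by rewrite -Hd.
case: (hb_rcons wn H) => Hw Hd E. rewrite !expnS in E.
have : d = 0 \/ d = 2 by lia.
case=> Ed; subst d.
  have E' : hb_value w = 2 ^ k.+1 - 1 by rewrite expnS; lia.
  rewrite E' in Hw. move/H2km1: Hw => ->. right. exists k.+1; first by rewrite leqnn.
  by rewrite subnn cats1.
have E' : hb_value w = 2 ^ k.+1 - 2 by rewrite expnS; lia.
rewrite E' in Hw.
case: k IH hk E E' Hw {H} => [|k] IH hk E E' Hw.
  by have := hb_pos Hw.
case: (IH w isT Hw) => [->|[i Hi ->]].
  by left; rewrite rcons_n.
right. exists i; first by lia.
rewrite -cats1 -catA /= cats1 rcons_n. congr (_ ++ _ :: nseq _ 2). lia.
Qed.
Definition f1 t i := nseq (t - i) 1 ++ 2 :: nseq i 0.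
Definition g2 t i := nseq i 1 ++ 0 :: nseq (t - i) 2.
Definition vs1 t := [seq nseq (t - i) 1 ++ 2 :: nseq i 0 | i <- iota 0 t.+1]
          ++ [:: 1 :: nseq t.+1 0].
Definition ls1 t := nseq t DArr ++ [:: Arr].
Definition vs2 t := nseq t 2 :: [seq nseq i 1 ++ 0 :: nseq (t - i) 2 | i <- iota 1 t].
Definition ls2 t := nseq t Arr.

Lemma notin_eq (c e : nat) k x y : c != e -> x ++ c :: y = nseq k e -> False.
Proof.
move=> ne /(congr1 (fun s => c \in s)). rewrite mem_cat inE eqxx orbT mem_nseq.
by rewrite (negbTE ne) andbF.
Qed.

Lemma P1 x y a b : x ++ [:: 1, 2 & y] = nseq a 1 ++ 2 :: nseq b 0 ->
  [/\ 0 < a, x = nseq a.-1 1 & y = nseq b 0].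
Proof.
elim: x a => [|h x IH] [|[|a]] //=.
- by case=> ->.
- case=> _ E. exfalso. exact: (@notin_eq 1 0 b x (2 :: y)).
- by case=> _ E; case: (IH 0 E).
- by case=> -> E; case: (IH a.+1 E) => _ -> ->.
Qed.

Lemma P2 x y a b : x ++ [:: 0, 2 & y] = nseq a 1 ++ 2 :: nseq b 0 -> False.
Proof.
elim: x a => [|h x IH] [|a] //=.
- case=> _ E. apply: (@notin_eq 2 0 b (x ++ [:: 0]) y) => //. by rewrite -catA.
- by case=> _ E; apply: (IH a E).
Qed.

Lemma P3 x y i k : x ++ [:: 1, 2 & y] = nseq i 1 ++ 0 :: nseq k 2 -> False.
Proof.
elim: x i => [|h x IH] [|[|i]] //=.
- case=> _ E. exact: (@notin_eq 1 2 k x (2 :: y)).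
- by case=> _ E; apply: (IH 0 E).
- by case=> _ E; apply: (IH i.+1 E).
Qed.

Lemma P4 x y i k : x ++ [:: 0, 2 & y] = nseq i 1 ++ 0 :: nseq k 2 ->
  [/\ x = nseq i 1, 0 < k & y = nseq k.-1 2].
Proof.
elim: x i => [|h x IH] [|i] //=.
- by case: k => // k [->].
- case=> _ E. exfalso. exact: (@notin_eq 0 2 k x (2 :: y)).
- by case=> -> E; case: (IH i E) => -> -> ->.
Qed.
Lemma hbv_f a b : hb_value (nseq a 1 ++ 2 :: nseq b 0) = 2 ^ (a + b).+1.
Proof.
rewrite hbv_cat hbv_n1 hbv_cons hbv_n0 /= size_nseq addn0.
rewrite -expnS mulnBl mul1n -expnD addnS subnK //.
by rewrite leq_pexp2l // ltnS leq_addl.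
Qed.

Lemma hbv_g a b : hb_value (nseq a 1 ++ 0 :: nseq b 2) = 2 ^ (a + b).+1 - 2.
Proof.
rewrite hbv_cat hbv_n1 hbv_cons hbv_n2 /= size_nseq.
rewrite mulnBl mul1n -expnD addnS.
have h1 : 2 ^ b.+1 <= 2 ^ (a + b).+1 by rewrite leq_pexp2l // ltnS leq_addl.
have h2 : 2 <= 2 ^ b.+1 by rewrite expnS leq_pmulr // expn_gt0.
lia.
Qed.

Lemma all3_n k d : d < 3 -> all (fun d => d < 3) (nseq k d).
Proof. by move=> h; rewrite all_nseq h orbT. Qed.

Lemma vert1 t w : hyperbinary (2 ^ t.+1) w <->
  (exists2 i, i <= t & w = f1 t i) \/ w = 1 :: nseq t.+1 0.
Proof.
split.
  case/H2m => [[//]|[[i Hi ->]|->]]; last by right.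
  by left; exists i.
case=> [[i Hi ->]|->].
  split.
  - by rewrite /f1 all_cat /= !all3_n.
  - by rewrite /f1; case: (t - i).
  - by rewrite /f1 hbv_f subnK.
split => //.
- by rewrite /= all3_n.
- by rewrite hbv_cons hbv_n0 size_nseq addn0 mul1n.
Qed.

Lemma mem1 t w : w \in vs1 t <->
  (exists2 i, i <= t & w = f1 t i) \/ w = 1 :: nseq t.+1 0.
Proof.
rewrite /vs1 mem_cat mem_seq1. split.
  case/orP => [/mapP [i]|/eqP ->]; last by right.
  rewrite mem_iota add0n ltnS => Hi ->. by left; exists i.
case=> [[i Hi ->]|->]; last by rewrite eqxx orbT.
apply/orP; left. apply/mapP. exists i => //. by rewrite mem_iota.
Qed.

Lemma vert2 t w : 1 <= t -> hyperbinary (2 ^ t.+1 - 2) w <->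
  w = nseq t 2 \/ (exists2 i, 0 < i <= t & w = g2 t i).
Proof.
move=> ht. split.
  case/H2k2 => // [->|[i Hi ->]]; first by left.
  by right; exists i.
case=> [->|[i Hi ->]].
  split.
  - by rewrite all3_n.
  - by case: t ht.
  - by rewrite hbv_n2.
split.
- by rewrite /g2 all_cat /= !all3_n.
- by rewrite /g2; case: i Hi.
- by rewrite /g2 hbv_g subnKC //; case/andP: Hi.
Qed.

Lemma mem2 t w : w \in vs2 t <->
  w = nseq t 2 \/ (exists2 i, 0 < i <= t & w = g2 t i).
Proof.
rewrite /vs2 inE. split.
  case/orP => [/eqP ->|/mapP [i]]; first by left.
  rewrite mem_iota add1n ltnS => Hi ->. by right; exists i.
case=> [->|[i Hi ->]]; first by rewrite eqxx.
apply/orP; right. apply/mapP. exists i => //. by rewrite mem_iota add1n ltnS.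
Qed.
Lemma nth_vs1 t j : j <= t -> nth [::] (vs1 t) j = f1 t j.
Proof.
move=> hj. rewrite /vs1 nth_cat size_map size_iota ltnS hj (nth_map 0) ?size_iota ?ltnS //.
by rewrite nth_iota ?ltnS.
Qed.

Lemma nth_vs1' t : nth [::] (vs1 t) t.+1 = 1 :: nseq t.+1 0.
Proof. by rewrite /vs1 nth_cat size_map size_iota ltnn subnn. Qed.

Lemma nth_ls1 t j : j <= t -> nth Arr (ls1 t) j = if j < t then DArr else Arr.
Proof.
move=> hj; rewrite /ls1 nth_cat size_nseq nth_nseq; case: ltnP => // h.
by have -> : j - t = 0 by lia.
Qed.

Lemma cnt_f a b : count_mem 0 (nseq a 1 ++ 2 :: nseq b 0) = b.
Proof. by rewrite count_cat /= !count_nseq /= mul0n mul1n. Qed.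

Lemma cnt_g a b : count_mem 1 (nseq a 1 ++ 0 :: nseq b 2) = a.
Proof. by rewrite count_cat /= !count_nseq /= mul0n mul1n add0n addn0. Qed.

Lemma uniq1 t : uniq (vs1 t).
Proof.
rewrite /vs1 cat_uniq; apply/and3P; split => //.
  rewrite map_inj_in_uniq ?iota_uniq // => i j _ _ /(congr1 (count_mem 0)).
  by rewrite !cnt_f.
rewrite has_seq1. apply/negP => /mapP [i]. rewrite mem_iota => /andP [_ Hi] E.
have := congr1 (count_mem 0) E. rewrite cnt_f /= count_nseq /= => Et.
lia.
Qed.

Lemma uniq2 t : uniq (vs2 t).
Proof.
rewrite /vs2 cons_uniq map_inj_in_uniq ?iota_uniq ?andbT.
  apply/negP => /mapP [i]. rewrite mem_iota add1n => /andP [Hi _] E.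
  have := congr1 (count_mem 1) E. rewrite cnt_g count_nseq /= => Et.
  lia.
move=> i j _ _ /(congr1 (count_mem 1)). by rewrite !cnt_g.
Qed.

Lemma nth_vs2 t j : 0 < j <= t -> nth [::] (vs2 t) j = g2 t j.
Proof.
case: j => // j /= hj. rewrite (nth_map 0) ?size_iota //.
by rewrite nth_iota // add1n.
Qed.

Lemma nth_ls2 t j : nth Arr (ls2 t) j = Arr.
Proof. by rewrite /ls2 nth_nseq; case: ifP. Qed.
Lemma part1 t : 1 <= t -> A_is_path (2 ^ t.+1) (vs1 t) (ls1 t).
Proof.
move=> ht.
have Hv : forall w, hyperbinary (2 ^ t.+1) w <-> w \in vs1 t :=
  fun w => iff_trans (vert1 t w) (iff_sym (mem1 t w)).
have Hs : size (ls1 t) = t.+1 by rewrite /ls1 size_cat size_nseq addn1.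
have Hsv : size (vs1 t) = t.+2 by rewrite /vs1 size_cat size_map size_iota addn1.
split.
- by rewrite Hsv Hs.
- exact: uniq1.
- exact: Hv.
move=> l u v; split.
  case=> Hu _ Hl. move/vert1: Hu => Hu.
  case: l Hl => [[[x [y [Eu Ev]]]|[y [Eu Ev]]]|[x [y [Eu Ev]]]].
  - exfalso. case: Hu => [[i Hi Ef]|El].
      exact: (P2 (etrans (esym Eu) Ef)).
    have E := etrans (esym Eu) El.
    clear Eu Ev; case: x E => [|h x] // [_ E].
    apply: (@notin_eq 2 0 t.+1 (x ++ [:: 0]) y) => //. by rewrite -catA.
  - case: Hu => [[i Hi Ef]|El]; last by rewrite Eu in El.
    have E := etrans (esym Eu) Ef. rewrite /f1 in E.
    case Hti: (t - i) E => [|k] E; last by case: E.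
    case: E => Ey.
    have Eit : i = t by lia.
    subst i. exists t; first by rewrite Hs.
    split.
    + by rewrite nth_ls1 // ltnn.
    + by rewrite nth_vs1 // Ef.
    + by rewrite nth_vs1' Ev Ey.
  - case: Hu => [[i Hi Ef]|El]; last first.
      exfalso. have E := etrans (esym Eu) El.
      clear Eu Ev; case: x E => [|h x] // [_ E].
      exact: (@notin_eq 1 0 t.+1 x (2 :: y)).
    case: (P1 (etrans (esym Eu) Ef)) => Hti Ex Ey.
    have hit : i < t by lia.
    exists i; first by rewrite Hs ltnW.
    split.
    + by rewrite nth_ls1 ?hit // ltnW.
    + by rewrite nth_vs1 // Ef.
    + by rewrite nth_vs1 // Ev Ex Ey /f1 subnS.
case=> i Hi [-> -> ->].
rewrite Hs ltnS in Hi.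
split.
- apply/Hv; apply: mem_nth. by rewrite Hsv ltnW.
- apply/Hv; apply: mem_nth. by rewrite Hsv.
rewrite nth_ls1 //. case: ltnP => hit.
  have [k ti] : exists k, t - i = k.+1 by exists (t - i).-1; lia.
  rewrite !nth_vs1 //. exists (nseq k 1), (nseq i 0).
  rewrite /f1 subnS ti -rcons_n cat_rcons. by split.
have Eit : i = t by lia.
subst i. rewrite nth_vs1 // nth_vs1'. right. exists (nseq t 0).
by rewrite /f1 subnn.
Qed.

Lemma part2 t : 1 <= t -> A_is_path (2 ^ t.+1 - 2) (vs2 t) (ls2 t).
Proof.
move=> ht.
have Hv : forall w, hyperbinary (2 ^ t.+1 - 2) w <-> w \in vs2 t :=
  fun w => iff_trans (vert2 w ht) (iff_sym (mem2 t w)).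
have Hs : size (ls2 t) = t by rewrite /ls2 size_nseq.
have Hsv : size (vs2 t) = t.+1 by rewrite /vs2 /= size_map size_iota.
split.
- by rewrite Hsv Hs.
- exact: uniq2.
- exact: Hv.
move=> l u v; split.
  case=> Hu _ Hl. move/(vert2 _ ht): Hu => Hu.
  case: l Hl => [[[x [y [Eu Ev]]]|[y [Eu Ev]]]|[x [y [Eu Ev]]]].
  - case: Hu => [En|[i Hi Eg]].
      exfalso. exact: (@notin_eq 0 2 t x (2 :: y) _ (etrans (esym Eu) En)).
    case: (P4 (etrans (esym Eu) Eg)) => Ex Hti Ey.
    have hit : i < t by lia.
    exists i; first by rewrite Hs.
    split.
    + by rewrite nth_ls2.
    + by rewrite nth_vs2 // Eg.
    + rewrite nth_vs2; last by rewrite hit andbT.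
      by rewrite Ev Ex Ey /g2 subnS -rcons_n cat_rcons.
  - case: Hu => [En|[i Hi Eg]]; last first.
      have E := etrans (esym Eu) Eg; rewrite /g2 in E; clear Eg; by case: i Hi E.
    exists 0; first by rewrite Hs.
    split.
    + by rewrite nth_ls2.
    + by rewrite En.
    + rewrite nth_vs2; last by rewrite ht.
      move: (etrans (esym Eu) En). case: t ht {Hv Hs Hsv En} => // k _ [Ey].
      by rewrite Ev Ey /g2 subSS subn0.
  - exfalso. case: Hu => [En|[i Hi Eg]].
      exact: (@notin_eq 1 2 t x (2 :: y) _ (etrans (esym Eu) En)).
    exact: (P3 (etrans (esym Eu) Eg)).
case=> i Hi [-> -> ->].
rewrite Hs in Hi.
split.
- apply/Hv; apply: mem_nth. by rewrite Hsv ltnW.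
- apply/Hv; apply: mem_nth. by rewrite Hsv.
rewrite nth_ls2 (@nth_vs2 t i.+1); last by [].
case: i Hi => [|i] Hi.
  right. case: t ht {Hv Hs Hsv Hi} => // k _. exists (nseq k 2).
  by rewrite /g2 subSS subn0.
left.
have [k ti] : exists k, t - i.+1 = k.+1 by exists (t - i.+1).-1; lia.
rewrite (@nth_vs2 t i.+1); last exact: ltnW.
exists (nseq i.+1 1), (nseq k 2).
have ti2 : t - i.+2 = k by lia.
rewrite /g2 ti ti2. split => //. by rewrite -[nseq i.+2 1]rcons_n cat_rcons.
Qed.

Theorem mainTheorem7 (t : nat) (ht : 1 <= t) :
  (forall n : nat, minimal_hyperbinary n (nseq t 1 ++ [:: 2]) ->
     A_is_path n
       ([seq nseq (t - i) 1 ++ 2 :: nseq i 0 | i <- iota 0 t.+1]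
          ++ [:: 1 :: nseq t.+1 0])
       (nseq t DArr ++ [:: Arr]))
  /\
  (forall n : nat, minimal_hyperbinary n (nseq t 2) ->
     A_is_path n
       (nseq t 2 :: [seq nseq i 1 ++ 0 :: nseq (t - i) 2 | i <- iota 1 t])
       (nseq t Arr)).
Proof.
split.
  move=> n [[_ _ Hn] _].
  have := hbv_f t 0. rewrite addn0 => /= H. rewrite H in Hn. subst n.
  exact: (part1 ht).
move=> n [[_ _ Hn] _].
rewrite hbv_n2 in Hn. subst n.
exact: (part2 ht).
Qed.
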